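(* Let $g_1,g_2$ be monic divisors of $x^m-1$ over $\mathbb{F}_q$, $v_1\in\mathcal{R}$, and let $\mathcal{D}_1$ be the QC code of length $2m$ generated by $(g_1,v_1g_1)$ and $(0,g_2)$. Then $\mathcal{D}_1$ is Euclidean dual-containing iff $g_1\mid g_1^{\perp}$, $g_1\mid g_2^{\perp}\overline{v_1}$ and $g_2\mid g_2^{\perp}(1+\overline{v_1}v_1)$.
   Context: $\mathcal{R}=\mathbb{F}_q[x]/(x^m-1)$, elements identified with representatives of degree $<m$; $[k]=(k_0,\dots,k_{m-1})$; $\overline{k}(x)=k(x^{-1})\bmod(x^m-1)$; $f^*(x)=x^{\deg f}f(1/x)$; for $k\in\mathcal{R}$, $f=\frac{x^m-1}{\gcd(k,x^m-1)}$ and $k^{\perp}=f(0)^{-1}f^*$. For $g\mid x^m-1$, ''$g\mid a$'' means $g$ divides the representative of $a\in\mathcal{R}$. The QC code generated by $(u_{i1},u_{i2})$, $i=1,2$, is $\{([r_1u_{11}+r_2u_{21}],[r_1u_{12}+r_2u_{22}]):r_i\in\mathcal{R}\}$. Euclidean dual-containing: $\mathcal{D}_1^{\perp_E}\subseteq\mathcal{D}_1$ with $\langle u,v\rangle_E=\sum u_iv_i$. *)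

(* Defs.v *)
From HB Require Import structures.
From mathcomp Require Import all_boot all_order all_algebra.
Set Implicit Arguments. Unset Strict Implicit. Unset Printing Implicit Defensive.
Import GRing.Theory.
Local Open Scope ring_scope.

(* R = F[x]/(x^m - 1); elements of R are represented by polynomials of
   size <= m (degree < m).  A general polynomial is mapped to R by [qc_red]. *)
Section QC.
Variables (F : fieldType) (m : nat).

Definition qc_xm1 : {poly F} := 'X^m - 1.

Definition qc_red (p : {poly F}) : {poly F} := p %% qc_xm1.

Definition qc_vec (k : {poly F}) : 'rV[F]_m := \row_(i < m) (qc_red k)`_i.

(* kbar(x) = k(x^{-1}) mod (x^m - 1) : coefficient i is k_{(-i) mod m} *)
Definition qc_bar (k : {poly F}) : {poly F} :=
  \poly_(i < m) (qc_red k)`_((m - i) %% m).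

(* f^*(x) = x^{deg f} f(1/x) *)
Definition recip (f : {poly F}) : {poly F} :=
  \poly_(i < size f) f`_((size f).-1 - i).

Definition qc_perp (k : {poly F}) : {poly F} :=
  let f := qc_xm1 %/ gcdp (qc_red k) qc_xm1 in
  qc_red ((f`_0)^-1 *: recip f).

Definition qc_dvd (g a : {poly F}) : bool := g %| qc_red a.

Definition D1 (g1 g2 v1 : {poly F}) : 'rV[F]_(m + m) -> Prop :=
  fun c => exists r1 r2 : {poly F},
    (size r1 <= m)%N /\ (size r2 <= m)%N /\
    c = row_mx (qc_vec (r1 * g1)) (qc_vec (r1 * (v1 * g1) + r2 * g2)).

Definition eucl (n : nat) (u v : 'rV[F]_n) : F := \sum_(i < n) u 0 i * v 0 i.

Definition dual_containing (n : nat) (C : 'rV[F]_n -> Prop) : Prop :=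
  forall u : 'rV[F]_n, (forall c, C c -> eucl u c = 0) -> C u.
End QC.

(* Main.v *)
Require Import Defs.
From HB Require Import structures.
From mathcomp Require Import all_boot all_order all_algebra.
From mathcomp Require Import zify ring.
Import GRing.Theory.

Lemma A1 n i j : (i <= n)%N -> (j <= n)%N -> ((i + j*n) %% n.+1 == 0)%N = (j == i).
Proof.
move=> hi hj; rewrite -(mod0n n.+1) -(eqn_modDr j) add0n.
have -> : (i + j * n + j = j * n.+1 + i)%N by rewrite mulnS; lia.
rewrite modnMDl !modn_small // eq_sym.
Qed.

Lemma A2 n i j : (i <= n)%N -> (j <= n)%N ->
  (i == (j*n) %% n.+1)%N = (j == (n.+1 - i) %% n.+1).
Proof.
move=> hi hj.
have -> : (i == (j*n) %% n.+1) = (i + j == (j * n) + j %[mod n.+1])%N.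
  by rewrite eqn_modDr (@modn_small i).
have -> : (j * n + j = j * n.+1)%N by rewrite mulnS; lia.
rewrite modnMl.
case: i hi => [|i] hi.
  by rewrite add0n subn0 modnn modn_small.
rewrite (@modn_small (n.+1 - i.+1)); last lia.
case: (ltnP (i.+1 + j) n.+1) => h.
  rewrite modn_small //; apply/idP/idP; lia.
have -> : (i.+1 + j = (i.+1 + j - n.+1) + n.+1)%N by lia.
rewrite modnDr modn_small; last lia.
apply/eqP/eqP; lia.
Qed.

Lemma A3 n : ((n * n) %% n.+1 = 1 %% n.+1)%N.
Proof.
case: n => [|k] //.
have -> : (k.+1 * k.+1 = k * k.+2 + 1)%N by nia.
by rewrite modnMDl.
Qed.

Lemma A4 n k j : (j <= k)%N -> ((k + j * n) %% n.+1 = (k - j) %% n.+1)%N.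
Proof.
move=> h.
have -> : (k + j * n = j * n.+1 + (k - j))%N by rewrite mulnS; lia.
by rewrite modnMDl.
Qed.

Lemma A5 n k : ((k + k * n) %% n.+1 = 0)%N.
Proof. by rewrite -mulnS modnMl. Qed.

Lemma A1' m i j : (0 < m)%N -> (i < m)%N -> (j < m)%N ->
  ((i + j * m.-1) %% m == 0)%N = (j == i).
Proof. by case: m => // n _ *; rewrite /= A1. Qed.
Lemma A2' m i j : (0 < m)%N -> (i < m)%N -> (j < m)%N ->
  (i == (j * m.-1) %% m)%N = (j == (m - i) %% m).
Proof. by case: m => // n _ *; rewrite /= A2. Qed.
Lemma A3' m : (0 < m)%N -> ((m.-1 * m.-1) %% m = 1 %% m)%N.
Proof. by case: m => // n _ *; rewrite /= A3. Qed.
Lemma A4' m k j : (0 < m)%N -> (j <= k)%N -> ((k + j * m.-1) %% m = (k - j) %% m)%N.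
Proof. by case: m => // n _ *; rewrite /= A4. Qed.
Lemma A5' m k : (0 < m)%N -> ((k + k * m.-1) %% m = 0)%N.
Proof. by case: m => // n _ *; rewrite /= A5. Qed.

Local Open Scope ring_scope.
Section Aux.
Variables (F : fieldType) (m : nat).
Hypothesis Hm : (0 < m)%N.
Implicit Types p q : {poly F}.

Local Notation M := (qc_xm1 F m).
Local Notation red := (@qc_red F m).

Lemma sizeM : size M = m.+1.
Proof. by rewrite /qc_xm1 -(size_XnsubC (1:F) Hm) polyC1. Qed.

Lemma M_neq0 : M != 0.
Proof. by rewrite -size_poly_eq0 sizeM. Qed.

Lemma size_red p : (size (red p) <= m)%N.
Proof. by rewrite -ltnS -sizeM /qc_red ltn_modp M_neq0. Qed.

Lemma red_small p : (size p <= m)%N -> red p = p.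
Proof. by move=> h; rewrite /qc_red modp_small // sizeM ltnS. Qed.

Lemma redK p : red (red p) = red p.
Proof. exact: modp_id. Qed.
Lemma redD p q : red (p + q) = red p + red q.
Proof. exact: modpD. Qed.
Lemma redN p : red (- p) = - red p.
Proof. exact: modpN. Qed.
Lemma redB p q : red (p - q) = red p - red q.
Proof. by rewrite redD redN. Qed.
Lemma redZ c p : red (c *: p) = c *: red p.
Proof. exact: modpZl. Qed.
Lemma red0 : red 0 = 0.
Proof. exact: mod0p. Qed.
Lemma red1 : red 1 = 1.
Proof. by apply: red_small; rewrite size_poly1. Qed.
Lemma red_mulr p q : red (p * red q) = red (p * q).
Proof. exact: modp_mul. Qed.
Lemma red_mull p q : red (red p * q) = red (p * q).
Proof. by rewrite mulrC red_mulr mulrC. Qed.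

Lemma red_eq0 p : (red p == 0) = (M %| p).
Proof.
apply/idP/idP => [/eqP h|h]; last by rewrite /qc_red modp_eq0.
by rewrite (divp_eq p M) -/(qc_red m p) h addr0 dvdp_mull.
Qed.

Lemma red_eqP p q : red p = red q <-> M %| p - q.
Proof.
rewrite -red_eq0 redB subr_eq0; split; [by move=> ->|by move/eqP].
Qed.

Lemma dvd_Xmk k : M %| 'X^(m * k) - 1.
Proof.
by rewrite exprM; have := subrXX ('X^m : {poly F}) 1 k; rewrite expr1n => ->; rewrite /qc_xm1 dvdp_mulIl.
Qed.

Lemma redXn n : red 'X^n = 'X^(n %% m).
Proof.
have -> : 'X^(n %% m) = red 'X^(n %% m) :> {poly F}.
  by rewrite red_small // size_polyXn ltn_pmod.
apply/red_eqP.
rewrite {1}(divn_eq n m) exprD mulnC -{2}(mul1r 'X^(n %% m)) -mulrBl.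
by apply: dvdp_mulr; apply: dvd_Xmk.
Qed.

Definition br p := red (p \Po 'X^(m.-1)).

Lemma comp_cong p q q' : M %| q - q' -> M %| (p \Po q) - (p \Po q').
Proof.
move=> h; rewrite !comp_polyE. rewrite -sumrB.
apply: (big_ind (fun x => M %| x)) => [|x y hx hy|i _]; first by rewrite dvdp0.
  by rewrite dvdp_add.
rewrite -scalerBr -mul_polyC; apply: dvdp_mull.
rewrite subrXX; exact: dvdp_trans h (dvdp_mulIl _ _).
Qed.

Lemma MY : M %| M \Po 'X^(m.-1).
Proof.
rewrite /qc_xm1 comp_polyB comp_Xn_poly -polyC1 comp_polyC polyC1 -exprM mulnC.
exact: dvd_Xmk.
Qed.

Lemma comp_mult p : M %| p -> M %| p \Po 'X^(m.-1).
Proof. move=> /divpK <-; rewrite comp_polyM; exact: dvdp_mull MY. Qed.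

Lemma br_red p : br (red p) = br p.
Proof.
apply/red_eqP; rewrite -comp_polyB; apply: comp_mult.
by rewrite -red_eq0 redB redK subrr.
Qed.

Lemma br_eq p q : red p = red q -> br p = br q.
Proof. by move=> h; rewrite -br_red h br_red. Qed.

Lemma brD p q : br (p + q) = br p + br q.
Proof. by rewrite /br comp_polyD redD. Qed.
Lemma brZ c p : br (c *: p) = c *: br p.
Proof. by rewrite /br comp_polyZ redZ. Qed.
Lemma brN p : br (- p) = - br p.
Proof. by rewrite -scaleN1r brZ scaleN1r. Qed.
Lemma brB p q : br (p - q) = br p - br q.
Proof. by rewrite brD brN. Qed.
Lemma br0 : br 0 = 0.
Proof. by have := brZ 0 0; rewrite !scale0r. Qed.
Lemma br1 : br 1 = 1.
Proof. by rewrite /br -polyC1 comp_polyC polyC1 red1. Qed.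
Lemma brM p q : br (p * q) = red (br p * br q).
Proof. by rewrite /br comp_polyM red_mull red_mulr. Qed.
Lemma br_reduced p : red (br p) = br p.
Proof. exact: redK. Qed.
Lemma brX k : br 'X^k = 'X^((k * m.-1) %% m).
Proof. by rewrite /br comp_Xn_poly -exprM redXn mulnC. Qed.

Lemma brK p : br (br p) = red p.
Proof.
rewrite (_ : br (br p) = br (p \Po 'X^(m.-1))); last exact: br_red.
rewrite /br -comp_polyA comp_Xn_poly -exprM.
apply/red_eqP; rewrite -{2}(comp_polyXr p); apply: comp_cong.
by apply/red_eqP; rewrite !redXn -{2}(expr1 'X) redXn A3'.
Qed.

Lemma br_M0 p : M %| p -> br p = 0.
Proof. by move=> h; rewrite -br_red; move: h; rewrite -red_eq0 => /eqP ->; rewrite br0. Qed.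

Lemma lin_sum (f : {poly F} -> {poly F}) :
  (forall p q, f (p + q) = f p + f q) -> (forall c p, f (c *: p) = c *: f p) ->
  forall n (E : nat -> F), f (\sum_(i < n) E i *: 'X^i) = \sum_(i < n) E i *: f 'X^i.
Proof.
move=> fD fZ n E.
have f0 : f 0 = 0 by have := fZ 0 0; rewrite !scale0r.
rewrite (big_morph f fD f0); apply: eq_bigr => i _; exact: fZ.
Qed.

Lemma poly_expand p : (size p <= m)%N -> p = \sum_(i < m) p`_i *: 'X^i.
Proof.
move=> h; rewrite -poly_def; apply/polyP => i; rewrite coef_poly.
case: ltnP => // hi; rewrite nth_default //; exact: leq_trans h hi.
Qed.

Lemma key i c : (i < m)%N -> (red ('X^i * br c))`_0 = (red c)`_i.
Proof.
move=> hi.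
rewrite -br_red; move: (size_red c); set C := red c => hC.
rewrite {1}(poly_expand _ hC) lin_sum; [|exact: brD|exact: brZ].
rewrite mulr_sumr (big_morph red redD red0) coef_sum.
under eq_bigr => j _ do rewrite -scalerAr redZ coefZ brX -exprD redXn modnDmr coefXn eq_sym A1' //.
rewrite (bigD1 (Ordinal hi)) //= eqxx mulr1 big1 ?addr0 // => j hj.
by move: hj; rewrite -val_eqE /= => /negbTE ->; rewrite mulr0.
Qed.

Definition ip p q := \sum_(i < m) (red p)`_i * (red q)`_i.

Lemma ipE a b : ip a b = (red (a * br b))`_0.
Proof.
rewrite -red_mull; move: (size_red a); set A := red a => hA.
rewrite {1}(poly_expand _ hA).
rewrite mulr_suml (big_morph red redD red0) coef_sum /ip -/A.
apply: eq_bigr => i _; by rewrite -scalerAl redZ coefZ key.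
Qed.

Lemma ipX p k : (k < m)%N -> ip p 'X^k = (red p)`_k.
Proof.
move=> hk; rewrite /ip redXn modn_small //.
under eq_bigr => j _ do rewrite coefXn.
rewrite (bigD1 (Ordinal hk)) //= eqxx mulr1 big1 ?addr0 // => j hj.
by move: hj; rewrite -val_eqE /= => /negbTE ->; rewrite mulr0.
Qed.

Lemma bar_eq k : qc_bar m k = br k.
Proof.
rewrite -br_red; move: (size_red k); set C := red k => hC.
rewrite {1}(poly_expand _ hC) lin_sum; [|exact: brD|exact: brZ].
apply/polyP => i; rewrite /qc_bar coef_poly coef_sum -/C.
under eq_bigr => j _ do rewrite coefZ brX coefXn.
case: (ltnP i m) => hi.
  under eq_bigr => j _ do rewrite A2' //.
  rewrite (bigD1 (Ordinal (ltn_pmod (m - i) Hm))) //= eqxx mulr1 big1 ?addr0 // => j hj.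
  by move: hj; rewrite -val_eqE /= => /negbTE ->; rewrite mulr0.
rewrite big1 // => j _.
have : ((j * m.-1) %% m < m)%N by rewrite ltn_pmod.
by move=> h; rewrite (_ : (i == _) = false) ?mulr0 //; apply/negbTE; rewrite neq_ltn (leq_trans h hi) orbT.
Qed.

Lemma red_sumX n (c : 'I_n -> F) (e : 'I_n -> nat) :
  red (\sum_(j < n) c j *: 'X^(e j)) = \sum_(j < n) c j *: 'X^(e j %% m).
Proof. rewrite (big_morph red redD red0); apply: eq_bigr => j _; by rewrite redZ redXn. Qed.

Lemma recipE p : red (recip p) = red ('X^((size p).-1) * br p).
Proof.
rewrite red_mulr /recip poly_def comp_polyE mulr_sumr.
under [in RHS]eq_bigr => j _ do rewrite -scalerAr -exprM -exprD.
rewrite red_sumX red_sumX (reindex_inj rev_ord_inj) /=.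
apply: eq_bigr => j _.
have hj := ltn_ord j.
move: (nat_of_ord j) hj => jj hj.
have e1 : ((size p).-1 - (size p - jj.+1) = jj)%N by move: (size p) hj => n; lia.
have e2 : (size p - jj.+1 = (size p).-1 - jj)%N by move: (size p) hj => n; lia.
rewrite e1 e2 mulnC A4' //; lia.
Qed.

Lemma perp_facts g : g %| M -> exists f G c k,
  [/\ G %= g, M = f * G, G != 0, c != 0 &
      red (qc_perp m g) = red (c *: ('X^k * br f))].
Proof.
move=> gM.
set G := gcdp (red g) M.
set f := M %/ G.
have hG : G %= g by apply: eqp_trans (gcdp_modl g M) (dvdp_gcd_idl gM).
have hM : M = f * G by rewrite divpK // dvdp_gcdr.
have hG0 : G != 0.
  by apply/eqP => h; move: M_neq0; rewrite hM h mulr0 eqxx.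
have hf0 : f`_0 != 0.
  have : M.[0] = f.[0] * G.[0] by rewrite {1}hM hornerM.
  rewrite /qc_xm1 hornerD hornerN hornerXn hornerC expr0n eqn0Ngt Hm /= sub0r.
  rewrite horner_coef0 => h; apply/eqP => h0; move: h; rewrite h0 mul0r.
  by move/eqP; rewrite oppr_eq0 oner_eq0.
exists f, G, (f`_0)^-1, (size f).-1; split => //.
  by rewrite invr_eq0.
by rewrite /qc_perp -/G -/f redK !redZ recipE.
Qed.

Lemma unitX k : red ('X^k * br 'X^k) = 1.
Proof. by rewrite brX -exprD redXn modnDmr A5' // expr0. Qed.

Lemma unit_cancel k z : red ('X^k * (br 'X^k * z)) = red z.
Proof. by rewrite mulrA -red_mull unitX mul1r. Qed.

Lemma perp_dvd g y : g %| M ->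
  (g %| red y) = (red (y * br (qc_perp m g)) == 0).
Proof.
move=> gM; have [f [G [c [k [hG hM hG0 hc hp]]]]] := perp_facts _ gM.
have hf : f != 0 by apply/eqP => h; move: M_neq0; rewrite hM h mul0r eqxx.
rewrite (br_eq _ _ hp) brZ brM brK -scalerAr redZ scaler_eq0 (negbTE hc) /=.
rewrite !red_mulr mulrA.
have e' : y * br 'X^k * f = br 'X^k * (y * f) by ring.
have e : red (y * f) = red ('X^k * red (y * br 'X^k * f)).
  by rewrite red_mulr e' unit_cancel.
have -> : (red (y * br 'X^k * f) == 0) = (red (y * f) == 0).
  apply/eqP/eqP => h; first by rewrite e h mulr0 red0.
  by rewrite e' -red_mulr h mulr0 red0.
by rewrite red_eq0 hM [y * f]mulrC dvdp_mul2l // (eqp_dvdl _ hG) [in RHS](dvdp_mod _ gM).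
Qed.

Lemma perp_ann g : g %| M -> red (qc_perp m g * br g) = 0.
Proof.
move=> gM; have [f [G [c [k [hG hM hG0 hc hp]]]]] := perp_facts _ gM.
have hGg : G %| g by move: hG => /andP[].
have hfg : M %| f * g by rewrite hM dvdp_mul.
rewrite -red_mull hp red_mull -scalerAl redZ -mulrA -red_mulr -brM (br_M0 _ hfg).
by rewrite mulr0 red0 scaler0.
Qed.

Lemma perp_gen g a : g %| M -> red (a * br g) = 0 ->
  exists s, red a = red (s * qc_perp m g).
Proof.
move=> gM h; have [f [G [c [k [hG hM hG0 hc hp]]]]] := perp_facts _ gM.
have hgG : g %| G by move: hG => /andP[].
have h1 : br (a * br g) = 0 by rewrite -br_red h br0.
move: h1; rewrite brM brK red_mulr => /eqP; rewrite red_eq0 => h2.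
have h3 : f * G %| br a * G by rewrite -hM (dvdp_trans h2) // dvdp_mul.
move: h3; rewrite dvdp_mul2r // => /divpK h4.
set w := br a %/ f in h4.
have hbf : br f = c^-1 *: red (br 'X^k * qc_perp m g).
  rewrite -(red_mulr (br 'X^k)) hp red_mulr -scalerAr redZ mulrCA unit_cancel br_reduced.
  by rewrite scalerA mulVf // scale1r.
exists (c^-1 *: (br w * br 'X^k)).
rewrite -brK -h4 brM hbf -scalerAr redZ (red_mulr (br w) (br 'X^k * qc_perp m g)).
by rewrite -scalerAl redZ mulrA.
Qed.

Lemma dvd_red g p : g %| M -> (g %| red p) = (g %| p).
Proof. by move=> h; rewrite /qc_red -dvdp_mod. Qed.

Lemma vec_eq p q : red p = red q -> qc_vec m p = qc_vec m q.
Proof. by move=> h; rewrite /qc_vec h. Qed.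

Lemma vec_inj p q : qc_vec m p = qc_vec m q -> red p = red q.
Proof.
move=> h; apply/polyP => i.
case: (ltnP i m) => hi.
  by move/rowP: h => /(_ (Ordinal hi)); rewrite !mxE.
by rewrite !nth_default // (leq_trans (size_red _) hi).
Qed.

Lemma red_coef0 p : (forall k, (k < m)%N -> (red p)`_k = 0) -> red p = 0.
Proof.
move=> h; apply/polyP => i; rewrite coef0.
case: (ltnP i m) => hi; first exact: h.
by rewrite nth_default // (leq_trans (size_red _) hi).
Qed.

Lemma eucl_row a1 a2 b1 b2 :
  eucl (row_mx (qc_vec m a1) (qc_vec m a2)) (row_mx (qc_vec m b1) (qc_vec m b2))
  = ip a1 b1 + ip a2 b2.
Proof.
rewrite /eucl big_split_ord /=; congr (_ + _); apply: eq_bigr => i _;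
  by rewrite ?row_mxEl ?row_mxEr !mxE.
Qed.

Lemma row_decomp (u : 'rV[F]_(m + m)) :
  exists a1 a2, u = row_mx (qc_vec m a1) (qc_vec m a2).
Proof.
pose o := Ordinal Hm.
exists (\poly_(i < m) u 0 (lshift m (insubd o i))), (\poly_(i < m) u 0 (rshift m (insubd o i))).
rewrite -{1}[u]hsubmxK; congr row_mx; apply/rowP => i;
  by rewrite !mxE red_small ?size_poly // coef_poly ltn_ord valKd.
Qed.

Lemma D1_sub g1 g2 v1 a1 a2 : g1 %| M -> g2 %| M ->
  @D1 F m g1 g2 v1 (row_mx (qc_vec m a1) (qc_vec m a2)) ->
  g1 %| red a1 /\ g2 %| red (a2 - v1 * a1).
Proof.
move=> g1M g2M [r1 [r2 [_ [_ /eq_row_mx [e1 e2]]]]].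
move: (vec_inj _ _ e1) (vec_inj _ _ e2) => {e1 e2} e1 e2.
split; first by rewrite e1 dvd_red // dvdp_mull.
rewrite redB e2 -(red_mulr v1 a1) e1 red_mulr -redB.
have -> : r1 * (v1 * g1) + r2 * g2 - v1 * (r1 * g1) = r2 * g2 by ring.
by rewrite dvd_red // dvdp_mull.
Qed.

Lemma D1_sup g1 g2 v1 a1 a2 : g1 \is monic -> g2 \is monic ->
  g1 %| red a1 -> g2 %| red (a2 - v1 * a1) ->
  @D1 F m g1 g2 v1 (row_mx (qc_vec m a1) (qc_vec m a2)).
Proof.
move=> m1 m2 d1 d2.
have n1 := monic_neq0 m1; have n2 := monic_neq0 m2.
exists (red a1 %/ g1), (red (a2 - v1 * a1) %/ g2); split; [|split].
- by rewrite size_divp // (leq_trans (leq_subr _ _)) ?size_red.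
- by rewrite size_divp // (leq_trans (leq_subr _ _)) ?size_red.
congr row_mx; apply: vec_eq; first by rewrite divpK // redK.
rewrite redD mulrCA (divpK d1) (divpK d2) redK red_mulr -redD addrC subrK.
by [].
Qed.

Lemma T a r g : red (a * br (r * g)) = red (br r * (a * br g)).
Proof. by rewrite brM (red_mulr a (br r * br g)) mulrCA. Qed.

Lemma eucl_D1 a1 a2 r1 r2 g1 g2 v1 :
  eucl (row_mx (qc_vec m a1) (qc_vec m a2))
       (row_mx (qc_vec m (r1 * g1)) (qc_vec m (r1 * (v1 * g1) + r2 * g2))) =
  (red (br r1 * (a1 * br g1 + a2 * (br v1 * br g1))))`_0
  + (red (br r2 * (a2 * br g2)))`_0.
Proof.
rewrite eucl_row !ipE brD mulrDr redD !T.
rewrite (_ : red (br r1 * (a2 * br (v1 * g1))) = red (br r1 * (a2 * (br v1 * br g1)))).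
  by rewrite -!coefD -!redD; congr (_`_0); congr red; ring.
by rewrite brM mulrA (red_mulr (br r1 * a2)); congr red; ring.
Qed.

Lemma perp_char g1 g2 v1 a1 a2 :
  (forall c, @D1 F m g1 g2 v1 c -> eucl (row_mx (qc_vec m a1) (qc_vec m a2)) c = 0) <->
  red (a1 * br g1 + a2 * (br v1 * br g1)) = 0 /\ red (a2 * br g2) = 0.
Proof.
split => [H|[hP hQ] c [r1 [r2 [_ [_ ->]]]]]; last first.
  by rewrite eucl_D1 -(red_mulr (br r1)) hP -(red_mulr (br r2)) hQ !mulr0 red0 coef0 addr0.
have hX : forall k, (k < m)%N -> (size ('X^k : {poly F}) <= m)%N.
  by move=> k hk; rewrite size_polyXn.
have wit : forall r1 r2 : {poly F}, (size r1 <= m)%N -> (size r2 <= m)%N ->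
   @D1 F m g1 g2 v1 (row_mx (qc_vec m (r1 * g1)) (qc_vec m (r1 * (v1 * g1) + r2 * g2))).
  by move=> r1 r2 h1 h2; exists r1, r2.
have s0 : (size (0%R : {poly F}) <= m)%N by rewrite size_poly0.
split; apply: red_coef0 => k hk.
  have := H _ (wit _ _ (hX k hk) s0).
  by rewrite eucl_D1 br0 mul0r red0 coef0 addr0 mulrC -ipE ipX.
have := H _ (wit _ _ s0 (hX k hk)).
by rewrite eucl_D1 br0 mul0r red0 coef0 add0r mulrC -ipE ipX.
Qed.

Theorem main_aux g1 g2 v1 : g1 \is monic -> g2 \is monic -> g1 %| M -> g2 %| M ->
  dual_containing (@D1 F m g1 g2 v1) <->
  [/\ qc_dvd m g1 (qc_perp m g1),
      qc_dvd m g1 (qc_perp m g2 * qc_bar m v1)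
    & qc_dvd m g2 (qc_perp m g2 * (1 + qc_bar m v1 * v1))].
Proof.
move=> m1 m2 g1M g2M.
rewrite /qc_dvd !bar_eq.
have step : dual_containing (@D1 F m g1 g2 v1) <->
  (forall a1 a2, red (a1 * br g1 + a2 * (br v1 * br g1)) = 0 -> red (a2 * br g2) = 0 ->
     g1 %| red a1 /\ g2 %| red (a2 - v1 * a1)).
  split => [H a1 a2 hP hQ | H u hu].
    apply: D1_sub => //; apply: H; exact/perp_char.
  have [a1 [a2 eu]] := row_decomp u.
  move: hu; rewrite eu => /perp_char [hP hQ].
  have [d1 d2] := H a1 a2 hP hQ.
  exact: D1_sup.
rewrite step; split.
  move=> H.
  have c1 : g1 %| red (qc_perp m g1).
    have hP : red (qc_perp m g1 * br g1 + 0 * (br v1 * br g1)) = 0.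
      by rewrite mul0r addr0 perp_ann.
    have hQ : red (0 * br g2) = 0 by rewrite mul0r red0.
    by case: (H _ _ hP hQ).
  have hP : red (- (qc_perp m g2 * br v1) * br g1 + qc_perp m g2 * (br v1 * br g1)) = 0.
    by rewrite (_ : _ + _ = 0) ?red0 //; ring.
  have [c2 c3] := H _ _ hP (perp_ann _ g2M).
  split => //.
    by move: c2; rewrite redN dvdpNr.
  by move: c3; rewrite (_ : _ - _ = qc_perp m g2 * (1 + br v1 * v1)) //; ring.
case=> c1 c2 c3 a1 a2 hP hQ.
set p1 := qc_perp m g1; set p2 := qc_perp m g2.
have [s hs] := perp_gen _ _ g2M hQ.
have hP' : red ((a1 + a2 * br v1) * br g1) = 0 by rewrite -hP; congr red; ring.
have [t ht] := perp_gen _ _ g1M hP'.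
have e : red (s * (p2 * br v1)) = red (a2 * br v1).
  by rewrite mulrA -red_mull -hs red_mull.
have ha1 : red a1 = red (t * p1 - s * (p2 * br v1)).
  by rewrite redB -ht e redD addrK.
have d : g2 %| v1 * p1.
  have h1 : red (p2 * br v1 * br p1) = 0 by apply/eqP; rewrite -perp_dvd.
  have h2 : red (v1 * p1 * br p2) = 0.
    have : br (p2 * br v1 * br p1) = 0 by rewrite -br_red h1 br0.
    rewrite brM brK (red_mulr (br (p2 * br v1)) p1) brM (red_mull (br p2 * br (br v1))) brK.
    rewrite (_ : br p2 * red v1 * p1 = (br p2 * p1) * red v1); last by ring.
    by rewrite red_mulr (_ : br p2 * p1 * v1 = v1 * p1 * br p2) //; ring.
  by rewrite -(dvd_red _ _ g2M) perp_dvd // h2.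
split.
  rewrite ha1 dvd_red //; apply: dvdp_sub; apply: dvdp_mull.
    by rewrite -(dvd_red _ _ g1M).
  by rewrite -(dvd_red _ _ g1M).
have e2 : red (a2 - v1 * a1) = red (s * (p2 * (1 + br v1 * v1)) - t * (v1 * p1)).
  rewrite redB hs -(red_mulr v1 a1) ha1 (red_mulr v1 (t * p1 - s * (p2 * br v1))) -redB.
  by congr red; ring.
rewrite e2 dvd_red //; apply: dvdp_sub; apply: dvdp_mull => //.
by rewrite -(dvd_red _ _ g2M).
Qed.

End Aux.

Theorem mainTheorem7 (F : finFieldType) (m : nat) (g1 g2 v1 : {poly F}) :
  (0 < m)%N ->
  g1 \is monic -> g2 \is monic ->
  g1 %| qc_xm1 F m -> g2 %| qc_xm1 F m ->
  (size v1 <= m)%N ->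
  dual_containing (@D1 F m g1 g2 v1) <->
  [/\ qc_dvd m g1 (qc_perp m g1),
      qc_dvd m g1 (qc_perp m g2 * qc_bar m v1)
    & qc_dvd m g2 (qc_perp m g2 * (1 + qc_bar m v1 * v1))].
Proof. move=> Hm m1 m2 d1 d2 _; exact: main_aux. Qed.
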